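(* Let $\mathcal G=(V,E,r)$ be a graph. The monoid of agglomerations $\mathbf A(\mathcal G)$ is a finitely generated reduced Krull monoid, and its divisor theory has $3|E|+\iota$ prime divisors, where $\iota$ is the number of isolated vertices of $\mathcal G$.
   Context: A graph $\mathcal G=(V,E,r)$ consists of a finite vertex set $V$, a finite edge set $E$ disjoint from $V$, and a map $r$ assigning to each edge a two-element subset of $V$; multiple edges allowed, no loops. An isolated vertex is one incident with no edge. An agglomeration on $\mathcal G$ is a function $a\colon V\cup E\to\mathbb N_0$ with $a(v)\ge a(e)$ whenever $v$ is incident with $e$; $\mathbf A(\mathcal G)$ is the monoid of agglomerations under pointwise addition. A monoid homomorphism $\varphi\colon H\to D$ is a divisor homomorphism if $\varphi(a)$ being a summand of $\varphi(b)$ in $D$ implies $a$ is a summand of $b$ in $H$. A cancellative monoid is Krull if it has a divisor homomorphism into a free monoid $\mathbb N_0^{(I)}$. A divisor theory is a divisor homomorphism $\varphi\colon H\to\mathbb N_0^{(I)}$ such that every standard basis vector $\vec e_i$ equals the pointwise minimum of finitely many $\varphi(a_1),\dots,\varphi(a_k)$ with $a_j\in H$; divisor theories are unique up to isomorphism, and the number of prime divisors is the cardinality of $I$. *)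

(* Defs.v *)
From HB Require Import structures.
From mathcomp Require Import all_boot all_order all_algebra.
Set Implicit Arguments. Unset Strict Implicit. Unset Printing Implicit Defensive.
Import GRing.Theory.
Local Open Scope ring_scope.

Section MonoidNotions.
Variable H : nmodType.

Definition msummand (a b : H) : Prop := exists c : H, b = a + c.

Definition mcancellative : Prop := forall a b c : H, a + b = a + c -> b = c.

Definition mreduced : Prop := forall a b : H, a + b = 0 -> a = 0.

Definition mfinitely_generated : Prop :=
  exists s : seq H, forall x : H, exists n : nat -> nat,
    x = \sum_(i < size s) s`_i *+ n i.

(* The free monoid N_0^(I): finitely supported functions I -> nat,
   with pointwise addition. *)
Definition fin_supp (I : eqType) (f : I -> nat) : Prop :=
  exists s : seq I, forall i, i \notin s -> f i = 0%N.

Definition free_hom (I : eqType) (phi : H -> I -> nat) : Prop :=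
  [/\ forall a, fin_supp (phi a),
      forall i, phi 0 i = 0%N &
      forall a b i, phi (a + b) i = (phi a i + phi b i)%N].

Definition free_summand (I : eqType) (f g : I -> nat) : Prop :=
  exists d : I -> nat, fin_supp d /\ forall i, g i = (f i + d i)%N.

Definition divisor_hom (I : eqType) (phi : H -> I -> nat) : Prop :=
  free_hom phi /\
  forall a b : H, free_summand (phi a) (phi b) -> msummand a b.

Definition Krull : Prop :=
  mcancellative /\ exists (I : eqType) (phi : H -> I -> nat), divisor_hom phi.

Definition min_images (I : eqType) (phi : H -> I -> nat) (a0 : H) (s : seq H)
  (j : I) : nat := foldr (fun a m => minn (phi a j) m) (phi a0 j) s.

Definition divisor_theory (I : eqType) (phi : H -> I -> nat) : Prop :=
  divisor_hom phi /\
  forall i : I, exists (a0 : H) (s : seq H),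
    forall j : I, min_images phi a0 s j = (i == j : nat).

End MonoidNotions.

(* A graph (V,E,r): finite types V (vertices) and E (edges), disjoint by
   construction, and r : E -> {set V} with #|r e| = 2 (multi-edges allowed,
   no loops). *)
Definition is_graph (V E : finType) (r : E -> {set V}) : Prop :=
  forall e : E, #|r e| = 2%N.

Definition isolated (V E : finType) (r : E -> {set V}) (v : V) : bool :=
  [forall e : E, v \notin r e].

Definition n_isolated (V E : finType) (r : E -> {set V}) : nat :=
  #|[set v : V | isolated r v]|.

Definition is_agglomeration (V E : finType) (r : E -> {set V})
  (a : {ffun V + E -> nat}) : bool :=
  [forall e : E, forall v : V, (v \in r e) ==> (a (inr e) <= a (inl v))%N].

Lemma agg_addr_closed (V E : finType) (r : E -> {set V}) :
  addr_closed (is_agglomeration r).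
Proof.
split.
  by rewrite unfold_in; apply/forallP=> e; apply/forallP=> v; rewrite !ffunE implybT.
move=> a b; rewrite !unfold_in => /forallP Ha /forallP Hb; apply/forallP=> e; apply/forallP=> v.
apply/implyP=> Hv; rewrite !ffunE.
by apply: leq_add; [move/forallP: (Ha e) => /(_ v)/implyP; apply | move/forallP: (Hb e) => /(_ v)/implyP; apply].
Qed.

Record agglomeration (V E : finType) (r : E -> {set V}) :=
  Agg { agg_val :> {ffun V + E -> nat}; _ : is_agglomeration r agg_val }.
HB.instance Definition _ V E r := [isSub for @agg_val V E r].
HB.instance Definition _ V E r := [Choice of @agglomeration V E r by <:].

Section AggMonoid.
Variables (V E : finType) (r : E -> {set V}).
Local Notation A := (agglomeration r).

Definition agg_zero : A := Agg (proj1 (agg_addr_closed r)).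
Definition agg_add (a b : A) : A :=
  Agg (proj2 (agg_addr_closed r) _ _ (valP a) (valP b)).

Lemma agg_addA : associative agg_add.
Proof. by move=> a b c; apply: val_inj; rewrite /= addrA. Qed.
Lemma agg_addC : commutative agg_add.
Proof. by move=> a b; apply: val_inj; rewrite /= addrC. Qed.
Lemma agg_add0 : left_id agg_zero agg_add.
Proof. by move=> a; apply: val_inj; rewrite /= add0r. Qed.

HB.instance Definition _ :=
  GRing.isNmodule.Build A agg_addA agg_addC agg_add0.

Lemma agg_valD (a b : A) : agg_val (a + b) = agg_val a + agg_val b.
Proof. by []. Qed.
Lemma agg_val0 : agg_val (0 : A) = 0.
Proof. by []. Qed.
End AggMonoid.

(* Main.v *)
Require Import Defs.
From HB Require Import structures.
From mathcomp Require Import all_boot all_order all_algebra.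
From mathcomp Require Import zify.
Set Implicit Arguments. Unset Strict Implicit. Unset Printing Implicit Defensive.

Section Generic.
Variable H : nmodType.

Definition ismin (I : Type) (phi : H -> I -> nat) (L : seq H) (x : I -> nat) :=
  forall i, (forall c, c \in L -> x i <= phi c i) /\ exists2 c, c \in L & phi c i = x i.

Lemma min_images_ismin (I : eqType) (phi : H -> I -> nat) a0 s :
  ismin phi (a0 :: s) (min_images phi a0 s).
Proof.
move=> i; elim: s => [|c s [IH1 [d IH2 IH3]]].
  split; first by move=> c; rewrite inE => /eqP->.
  by exists a0; rewrite ?inE ?eqxx.
have E : min_images phi a0 (c :: s) i = minn (phi c i) (min_images phi a0 s i) by [].
rewrite E; split.
  move=> d'; rewrite !inE => /or3P [/eqP->|/eqP->|ds].
  - by rewrite geq_min IH1 ?inE ?eqxx ?orbT.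
  - by rewrite geq_minl.
  - by rewrite geq_min IH1 ?inE ?ds ?orbT.
case: (leqP (phi c i) (min_images phi a0 s i)) => h.
  by exists c; rewrite ?inE ?eqxx ?orbT //; lia.
exists d; last by rewrite IH3; lia.
by move: IH2; rewrite !inE => /orP [->|->]; rewrite ?orbT.
Qed.

Lemma ismin_ext (I : Type) (phi : H -> I -> nat) L x y :
  ismin phi L x -> (forall i, x i = y i) -> ismin phi L y.
Proof. by move=> h e i; rewrite -e; apply: h. Qed.

Lemma ismin_add (I : Type) (phi : H -> I -> nat) L M x y :
  (forall a b i, phi (a + b)%R i = phi a i + phi b i) ->
  ismin phi L x -> ismin phi M y ->
  ismin phi [seq (a + b)%R | a <- L, b <- M] (fun i => x i + y i).
Proof.
move=> hom hx hy i; have [hx1 [a aL ea]] := hx i; have [hy1 [b bM eb]] := hy i.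
split.
  move=> c /allpairsP [[a' b'] [/= a'L b'M ->]].
  by rewrite hom leq_add ?hx1 ?hy1.
by exists (a + b)%R; [apply: allpairs_f | rewrite hom ea eb].
Qed.

Lemma summand_le (I : eqType) (phi : H -> I -> nat) a b :
  free_hom phi -> msummand a b -> forall i, phi a i <= phi b i.
Proof. by case=> _ _ hom [c ->] i; rewrite hom leq_addr. Qed.

Lemma divhom_le (I : eqType) (phi : H -> I -> nat) a b :
  divisor_hom phi -> (forall i, phi a i <= phi b i) -> msummand a b.
Proof.
case=> [[fs _ _] hd] le; apply: hd.
exists (fun i => phi b i - phi a i); split; last by move=> i; rewrite subnKC.
have [s hs] := fs b; exists s => i /hs ->; by [].
Qed.

Lemma le_divhom (I : finType) (phi : H -> I -> nat) :
  free_hom phi -> (forall a b, (forall i, phi a i <= phi b i) -> msummand a b) ->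
  divisor_hom phi.
Proof.
move=> fh hd; split => // a b [d [_ e]]; apply: hd => i.
by rewrite e leq_addr.
Qed.

Lemma ismin_bound (I : finType) (phi : H -> I -> nat) L x :
  ismin phi L x -> exists a, forall i, x i <= phi a i.
Proof.
move=> h; case: (pickP (fun _ : I => true)) => [i0 _|e].
  have [_ [c cL _]] := h i0; exists c => i; have [h1 _] := h i; exact: h1.
by exists 0%R => i; have := e i.
Qed.

Lemma gen_all (I : finType) (psi : H -> I -> nat) :
  divisor_theory psi -> forall y : I -> nat, exists T, ismin psi T y.
Proof.
move=> [[[_ h0 hom] _] dt].
have unit i : exists T, ismin psi T (fun j => (i == j : nat)).
  have [a0 [s e]] := dt i; exists (a0 :: s).
  by apply: ismin_ext (min_images_ismin psi a0 s) _.
suff: forall n y, \sum_i y i = n -> exists T, ismin psi T y by move=> P y; exact: P _ y erefl.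
elim=> [|n IH] y sy.
  exists [:: 0%R] => i; split.
    by move=> c; rewrite inE => /eqP ->; rewrite h0; move/eqP: sy; rewrite sum_nat_eq0 => /forallP /(_ i) /eqP ->.
  exists 0%R; rewrite ?inE // h0.
  by move/eqP: sy; rewrite sum_nat_eq0 => /forallP /(_ i) /eqP ->.
have [i yi] : exists i, 0 < y i.
  apply/existsP; apply: contraT; rewrite negb_exists => /forallP hn.
  have : \sum_i y i == 0 by rewrite sum_nat_eq0; apply/forallP => i; have := hn i; rewrite lt0n negbK.
  by rewrite sy.
pose y' j := y j - (i == j).
have sy' : \sum_j y' j = n.
  move: sy; rewrite (bigD1 i) //= => sy.
  rewrite (bigD1 i) //= /y' eqxx (eq_bigr y) => [|j /negbTE]; last by rewrite eq_sym => ->; rewrite subn0.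
  simpl in *; lia.
have [T1 h1] := IH y' sy'.
have [T2 h2] := unit i.
exists [seq (a + b)%R | a <- T1, b <- T2].
apply: ismin_ext (ismin_add hom h1 h2) _ => j.
rewrite /y'; case: eqP => [<-|_]; lia.
Qed.

Lemma transfer (I J : finType) (phi : H -> J -> nat) (psi : H -> I -> nat) L L'
  xphi x'phi xpsi x'psi :
  divisor_hom phi -> divisor_theory psi ->
  ismin phi L xphi -> ismin phi L' x'phi -> ismin psi L xpsi -> ismin psi L' x'psi ->
  (forall j, xphi j <= x'phi j) -> forall i, xpsi i <= x'psi i.
Proof.
move=> dphi dpsi m1 m2 m3 m4 le.
have fphi := dphi.1; have fpsi := dpsi.1.1; have [_ _ homphi] := fphi; have [_ _ hompsi] := fpsi.
have [a ha] := ismin_bound m3.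
have [T hT] := gen_all dpsi (fun i => psi a i - xpsi i).
have s1 s t : s \in L -> t \in T -> msummand a (s + t)%R.
  move=> sL tT; apply: (divhom_le dpsi.1) => i; rewrite hompsi.
  have [h3 _] := m3 i; have [hT1 _] := hT i.
  have := h3 _ sL; have := hT1 _ tT; have := ha i; lia.
have s3 s' t j : s' \in L' -> t \in T -> phi a j <= phi s' j + phi t j.
  move=> s'L tT; have [_ [s sL es]] := m1 j; have [h2 _] := m2 j.
  have := summand_le fphi (s1 _ _ sL tT) j; rewrite homphi es.
  have := le j; have := h2 _ s'L; lia.
have s5 s' i : s' \in L' -> xpsi i <= psi s' i.
  move=> s'L; have [_ [t tT et]] := hT i.
  have hs : msummand a (s' + t)%R.
    by apply: (divhom_le dphi) => j; rewrite homphi; exact: s3.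
  have := summand_le fpsi hs i.
  rewrite hompsi et; have := ha i; lia.
move=> i; have [_ [s' s'L <-]] := m4 i; exact: s5.
Qed.
End Generic.

Section Count.
Variable H : nmodType.

Lemma ismin0 (I : eqType) (phi : H -> I -> nat) :
  free_hom phi -> ismin phi [:: 0%R] (fun _ => 0).
Proof. by case=> _ h0 _ i; split; [move=> c; rewrite inE => /eqP -> | exists 0%R; rewrite ?inE]. Qed.

Lemma card_le (I J : finType) (phi : H -> J -> nat) (psi : H -> I -> nat) :
  divisor_theory phi -> divisor_theory psi -> #|I| <= #|J|.
Proof.
move=> dphi dpsi.
have [pa hpa] : exists pa : I -> H * seq H, forall i j, min_images psi (pa i).1 (pa i).2 j = (i == j).
  have h i : exists p : H * seq H, forall j, min_images psi p.1 p.2 j = (i == j).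
    by have [a0 [s e]] := dpsi.2 i; exists (a0, s).
  exact: (fin_all_exists h).
have [pb hpb] : exists pb : J -> H * seq H, forall i j, min_images phi (pb i).1 (pb i).2 j = (i == j).
  have h i : exists p : H * seq H, forall j, min_images phi p.1 p.2 j = (i == j).
    by have [a0 [s e]] := dphi.2 i; exists (a0, s).
  exact: (fin_all_exists h).
have z1 := ismin0 dphi.1.1; have z2 := ismin0 dpsi.1.1.
have key i j : 0 < min_images phi (pa i).1 (pa i).2 j ->
    forall k, min_images psi (pb j).1 (pb j).2 k = (i == k).
  move=> hj.
  have le1 : forall k, min_images psi (pb j).1 (pb j).2 k <= (i == k).
    move=> k; rewrite -hpa.
    apply: (transfer dphi.1 dpsi (min_images_ismin _ _ _) (min_images_ismin _ _ _)
             (min_images_ismin _ _ _) (min_images_ismin _ _ _)) => j'.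
    by rewrite hpb; case: eqP => [<-|] //.
  have ge1 : 0 < min_images psi (pb j).1 (pb j).2 i.
    rewrite lt0n; apply/negP => /eqP h0.
    suff: min_images phi (pb j).1 (pb j).2 j <= 0 by rewrite hpb eqxx.
    apply: (transfer dpsi.1 dphi (min_images_ismin psi (pb j).1 (pb j).2) z2 (min_images_ismin phi (pb j).1 (pb j).2) z1) => k.
    have := le1 k; case: eqP => [<-|]; rewrite ?h0 //; lia.
  move=> k; have := le1 k; case: eqP => [<-|] /=; lia.
have [f hf] : exists f : I -> J, forall i, 0 < min_images phi (pa i).1 (pa i).2 (f i).
  suff h i : exists j, 0 < min_images phi (pa i).1 (pa i).2 j by exact: (fin_all_exists h).
  apply/existsP; apply: contraT; rewrite negb_exists => /forallP hn.
  suff: min_images psi (pa i).1 (pa i).2 i <= 0 by rewrite hpa eqxx.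
  apply: (transfer dphi.1 dpsi (min_images_ismin phi (pa i).1 (pa i).2) z1 (min_images_ismin psi (pa i).1 (pa i).2) z2) => j.
  by have := hn j; rewrite lt0n negbK => /eqP ->.
apply: (@leq_card _ _ f) => i i' e.
have := key _ _ (hf i) i; have := key _ _ (hf i') i; rewrite e eqxx => ->.
by case: eqP.
Qed.
End Count.
Import GRing.Theory.

Lemma transport (H : nmodType) (I J : finType) (phi : H -> J -> nat) (h : I -> J) (g : J -> I) :
  cancel g h -> cancel h g -> divisor_theory phi -> divisor_theory (fun a k => phi a (h k)).
Proof.
move=> gK hK dphi; have [[_ h0 hom] _] := dphi.1; split.
  apply: le_divhom.
    split; [by move=> x; exists (enum I) => i; rewrite mem_enum | by move=> i; rewrite h0 | by move=> *; rewrite hom].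
  move=> x y le; apply: (divhom_le dphi.1) => j; rewrite -(gK j); exact: le.
move=> k; have [a0 [s e]] := dphi.2 (h k); exists a0, s => j.
by have := e (h j); rewrite (inj_eq (can_inj hK)).
Qed.

Lemma inlE (A B : eqType) (x y : A) : (inl x == inl y :> A + B) = (x == y). Proof. by []. Qed.
Lemma inrE (A B : eqType) (x y : B) : (inr x == inr y :> A + B) = (x == y). Proof. by []. Qed.
Lemma inlrE (A B : eqType) (x : A) (y : B) : (inl x == inr y :> A + B) = false. Proof. by []. Qed.
Lemma inrlE (A B : eqType) (x : A) (y : B) : (inr y == inl x :> A + B) = false. Proof. by []. Qed.
Lemma sigE (T : eqType) (P : pred T) x y (hx : P x) (hy : P y) : (exist _ x hx == exist _ y hy :> {x | P x}) = (x == y). Proof. by []. Qed.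

Section Concrete.
Variables (V E : finType) (r : E -> {set V}).
Hypothesis isg : is_graph r.
Local Notation A := (agglomeration r).

Lemma aggP (a : A) e v : v \in r e -> a (inr e) <= a (inl v).
Proof.
have := valP a; rewrite /is_agglomeration => /forallP /(_ e) /forallP /(_ v) /implyP; exact.
Qed.

Lemma mkaggP (f : V + E -> nat) :
  (forall e v, v \in r e -> f (inr e) <= f (inl v)) -> is_agglomeration r [ffun p => f p].
Proof.
move=> h; apply/forallP => e; apply/forallP => v; apply/implyP => hv; rewrite !ffunE; exact: h.
Qed.

Definition mkA (f : V + E -> nat) h : A := Agg (@mkaggP f h).
Arguments mkA : clear implicits.
Lemma mkAE f h p : mkA f h p = f p.
Proof. by rewrite /mkA /= ffunE. Qed.

Lemma addAE (a b : A) p : (a + b)%R p = a p + b p.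
Proof. by rewrite agg_valD ffunE. Qed.
Lemma zeroAE p : (0 : A)%R p = 0.
Proof. by rewrite agg_val0 ffunE. Qed.

Lemma A_ext (a b : A) : (forall p, a p = b p) -> a = b.
Proof. by move=> h; apply: val_inj; apply/ffunP. Qed.

Definition gens : seq A :=
  pmap (insub : {ffun V + E -> nat} -> option A)
    [seq [ffun p => nat_of_bool (b p)] | b : {ffun V + E -> bool} <- enum {ffun V + E -> bool}].

Definition span (x : A) := exists n : nat -> nat,
  x = (\sum_(i < size gens) gens`_i *+ n i)%R.

Lemma span0 : span 0%R.
Proof. by exists (fun _ => 0); rewrite big1 // => i _; rewrite mulr0n. Qed.

Lemma spanD x y : span x -> span y -> span (x + y)%R.
Proof.
move=> [n ->] [m ->]; exists (fun i => n i + m i).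
by rewrite -big_split; apply: eq_bigr => i _; rewrite mulrnDr.
Qed.

Lemma span_gen c : c \in gens -> span c.
Proof.
move=> cg; exists (fun i => (i == index c gens : nat)).
have k_lt : index c gens < size gens by rewrite index_mem.
rewrite (bigD1 (Ordinal k_lt)) //= eqxx mulr1n nth_index // big1 ?addr0 // => i hi.
suff -> : (nat_of_ord i == index c gens) = false by rewrite mulr0n.
by apply: negbTE; apply: contra hi => /eqP e; apply/eqP; apply: val_inj.
Qed.

Lemma span_all x : span x.
Proof.
suff: forall n (x : A), \sum_p x p <= n -> span x by move=> P; exact: P _ x (leqnn _).
elim=> [|n IH] {}x hx.
  have -> : x = 0%R; last exact: span0.
  apply: A_ext => p; rewrite zeroAE; move: hx; rewrite leqn0 sum_nat_eq0 => /forallP /(_ p) /eqP; done.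
case: (pickP (fun p => 0 < x p)) => [p0 hp0 | h0]; last first.
  have -> : x = 0%R; last exact: span0.
  by apply: A_ext => p; have := h0 p; rewrite zeroAE /=; case: (x p).
have hz : forall e v, v \in r e -> nat_of_bool (0 < x (inr e)) <= nat_of_bool (0 < x (inl v)).
  by move=> e v /(aggP x); case: (x (inr e)) => [|k]; case: (x (inl v)).
have hx' : forall e v, v \in r e -> x (inr e) - (0 < x (inr e)) <= x (inl v) - (0 < x (inl v)).
  by move=> e v /(aggP x); case: (x (inr e)) => [|k]; case: (x (inl v)) => [|m] //=; rewrite !subn1.
pose z := mkA (fun p => nat_of_bool (0 < x p)) hz.
pose x' := mkA (fun p => x p - (0 < x p)) hx'.
have ex : x = (z + x')%R.
  apply: A_ext => p; rewrite addAE !mkAE; case: (x p) => [|k] //=; rewrite subn1 /=; lia.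
rewrite ex; apply: spanD.
  apply: span_gen; rewrite mem_pmap; apply/mapP; exists (val z); last by rewrite valK.
  apply/mapP; exists [ffun p => 0 < x p]; first by rewrite mem_enum.
  by apply/ffunP => p; rewrite !ffunE.
apply: IH.
have es : \sum_p x p = \sum_p x' p + \sum_p z p.
  rewrite -big_split; apply: eq_bigr => p _ /=; rewrite !mkAE; case: (x p) => [|k] //=; rewrite subn1 /=; lia.
move: hx; rewrite es [\sum_p z p](bigD1 p0) //= mkAE; move: hp0; case: (x p0) => //= k _; lia.
Qed.

Local Notation inc := {p : E * V | p.2 \in r p.1}.
Local Notation iso := {v : V | isolated r v}.
Local Notation J := ((E + inc) + iso)%type.

Definition phi0 (a : A) (j : J) : nat :=
  match j with
  | inl (inl e) => a (inr e)
  | inl (inr p) => a (inl (val p).2) - a (inr (val p).1)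
  | inr v => a (inl (val v))
  end.

Lemma not_iso v : ~~ isolated r v -> exists e, v \in r e.
Proof. by rewrite /isolated negb_forall => /existsP [e]; rewrite negbK; exists e. Qed.

Lemma iso_not v e : isolated r v -> v \in r e -> False.
Proof. by move=> /forallP /(_ e) /negP. Qed.

Lemma phi0_hom : free_hom phi0.
Proof.
split.
- by move=> a; exists (enum {: J}) => i; rewrite mem_enum.
- by case=> [[e|[[e v] h]]|[v h]] /=; rewrite !zeroAE.
- move=> a b [[e|[[e v] h]]|[v h]] /=; rewrite !addAE //.
  have := aggP a h; have := aggP b h; rewrite /=; lia.
Qed.

Lemma phi0_divhom : divisor_hom phi0.
Proof.
apply: le_divhom; first exact: phi0_hom.
move=> a b le.
have leE e : a (inr e) <= b (inr e) by exact: (le (inl (inl e))).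
have leI e v (h : v \in r e) : a (inl v) - a (inr e) <= b (inl v) - b (inr e).
  by exact: (le (inl (inr (exist _ (e, v) h)))).
have lep p : a p <= b p.
  case: p => [v|e]; last exact: leE.
  case hv: (isolated r v); first by exact: (le (inr (exist _ v hv))).
  have [e he] := not_iso (negbT hv).
  have := leI e v he; have := leE e; have := aggP a he; have := aggP b he; lia.
have hc : forall e v, v \in r e -> b (inr e) - a (inr e) <= b (inl v) - a (inl v).
  move=> e v he; have := leI e v he; have := leE e; have := aggP a he; have := aggP b he; lia.
exists (mkA (fun p => b p - a p) hc).
by apply: A_ext => p; rewrite addAE mkAE subnKC.
Qed.

Definition eF : A := @mkA (fun _ => 1) (fun _ _ _ => leqnn 1).
Lemma eU_P e v : v \in r e -> (fun p : V + E => if p is inl _ then 1 else 0) (inr e) <= (fun p : V + E => if p is inl _ then 1 else 0) (inl v).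
Proof. by []. Qed.
Definition eU : A := mkA _ eU_P.
Lemma eu_P (w : V) e v : v \in r e -> (fun p : V + E => nat_of_bool (p == inl w)) (inr e) <= (fun p : V + E => nat_of_bool (p == inl w)) (inl v).
Proof. by []. Qed.
Definition eu w : A := mkA _ (eu_P w).
Definition fw (e0 : E) (p : V + E) : nat :=
  match p with inl v => v \in r e0 | inr e => e == e0 end.
Lemma ew_P e0 e v : v \in r e -> fw e0 (inr e) <= fw e0 (inl v).
Proof. by rewrite /fw /= => h; case: eqP => // <-; rewrite h. Qed.
Definition ew e0 : A := mkA _ (ew_P e0).
Definition fUe (e0 : E) (p : V + E) : nat :=
  match p with inl v => 1 | inr e => e != e0 end.
Lemma eUe_P e0 e v : v \in r e -> fUe e0 (inr e) <= fUe e0 (inl v).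
Proof. by rewrite /fUe; case: eqP. Qed.
Definition eUe e0 : A := mkA _ (eUe_P e0).

Lemma eFE p : eF p = 1. Proof. exact: ffunE. Qed.
Lemma eUE p : eU p = if p is inl _ then 1 else 0. Proof. exact: ffunE. Qed.
Lemma euE w p : eu w p = (p == inl w). Proof. exact: ffunE. Qed.
Lemma ewE e0 p : ew e0 p = fw e0 p. Proof. exact: ffunE. Qed.
Lemma eUeE e0 p : eUe e0 p = fUe e0 p. Proof. exact: ffunE. Qed.

Lemma phi0_theory : divisor_theory phi0.
Proof.
split; first exact: phi0_divhom.
case=> [[e|[[e v] h]]|[v h]].
- exists (ew e), [:: eF] => j; rewrite /min_images /=.
  case: j => [[e'|[[e' v'] h']]|[v' h']] /=;
    rewrite ?eFE ?eUE ?euE ?ewE ?eUeE /fw /fUe /= ?inlE ?inrE ?inlrE ?inrlE ?sigE /=.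
  + by rewrite eq_sym; case: (e == e').
  + by rewrite subnn min0n.
  + by case hv: (v' \in r e) => //; case: (iso_not h' hv).
- exists eU, [:: eUe e; eu v] => j; rewrite /min_images /=.
  case: j => [[e'|[[e' v'] h']]|[v' h']] /=;
    rewrite ?eFE ?eUE ?euE ?ewE ?eUeE /fw /fUe /= ?inlE ?inrE ?inlrE ?inrlE ?sigE /=.
  + by rewrite !minn0.
  + by rewrite xpair_eqE [e == e']eq_sym [v == v']eq_sym; case: (e' == e); case: (v' == v).
  + case: eqP => [ev|]; last by rewrite minn0.
    by move: h'; rewrite ev => /iso_not /(_ h).
- exists (eu v), [::] => j; rewrite /min_images /=.
  case: j => [[e'|[[e' v'] h']]|[v' h']] /=;
    rewrite ?eFE ?eUE ?euE ?ewE ?eUeE /fw /fUe /= ?inlE ?inrE ?inlrE ?inrlE ?sigE /=.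
  + by [].
  + case: eqP => [ev|] //.
    by move: h'; rewrite /= ev => /(iso_not h).
  + by rewrite eq_sym.
Qed.

Lemma card_J : #|{: J}| = 3 * #|E| + n_isolated r.
Proof.
rewrite !card_sum.
have -> : #|{: inc}| = \sum_e #|r e|.
  rewrite card_sig -sum1_card; symmetry.
  rewrite (eq_bigr (fun e => \sum_(v in r e) 1)) => [|e _]; last by rewrite sum1_card.
  rewrite pair_big_dep; apply: eq_bigl => p; by rewrite inE.
rewrite (eq_bigr (fun _ => 2)) => [|e _]; last exact: isg.
rewrite sum_nat_const.
have -> : #|{: iso}| = n_isolated r.
  by rewrite card_sig /n_isolated; apply: eq_card => v; rewrite !inE.
have -> : #|[pred _ : E | true]| = #|E| by apply: eq_card.
lia.
Qed.

Lemma exists_phi : exists phi : A -> 'I_(3 * #|E| + n_isolated r) -> nat, divisor_theory phi.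
Proof.
pose h : 'I_(3 * #|E| + n_isolated r) -> J := fun k => enum_val (cast_ord (esym card_J) k).
pose g : J -> 'I_(3 * #|E| + n_isolated r) := fun j => cast_ord card_J (enum_rank j).
have gK : cancel g h by move=> j; rewrite /g /h cast_ordK enum_rankK.
have hK : cancel h g by move=> k; rewrite /g /h enum_valK cast_ordKV.
by exists (fun a k => phi0 a (h k)); apply: transport gK hK phi0_theory.
Qed.

Lemma agg_cancel : mcancellative A.
Proof.
move=> a b c e; apply: A_ext => p; have := congr1 (fun x : A => x p) e.
by rewrite !addAE => /addnI.
Qed.

Lemma agg_reduced : mreduced A.
Proof.
move=> a b e; apply: A_ext => p; have := congr1 (fun x : A => x p) e.
rewrite addAE !zeroAE; lia.
Qed.

Lemma agg_krull : Krull A.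
Proof. split; first exact: agg_cancel. by exists _, phi0; exact: phi0_divhom. Qed.

Lemma agg_fg : mfinitely_generated A.
Proof. by exists gens => x; exact: span_all. Qed.
End Concrete.

Unset Implicit Arguments.
Theorem theorem4p6 (V E : finType) (r : E -> {set V}) :
  is_graph r ->
  [/\ mfinitely_generated (agglomeration r),
      mreduced (agglomeration r),
      Krull (agglomeration r),
      exists phi : agglomeration r -> 'I_(3 * #|E| + n_isolated r) -> nat,
        divisor_theory phi
    & forall (I : finType) (phi : agglomeration r -> I -> nat),
        divisor_theory phi -> #|I| = (3 * #|E| + n_isolated r)%N].
Proof.
move=> isg; have [phi dphi] := exists_phi isg.
split; [exact: agg_fg | exact: agg_reduced | exact: agg_krull | by exists phi | ].
move=> I psi dpsi; apply/eqP; rewrite eqn_leq.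
have := card_le dphi dpsi; have := card_le dpsi dphi; rewrite card_ord => -> ->.
by [].
Qed.
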